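(* Let $\Gamma\subset\mathrm{PSL}_2\mathbb{C}$ be a finite-covolume Kleinian group whose traces all lie in $R$, the ring of integers of the number field $\mathbb{Q}(\mathrm{tr}\,\Gamma)$. If $A,B,X,Y\in\Gamma$ satisfy $\langle A,B\rangle=\Gamma=\langle X,Y\rangle$, then $2-\mathrm{tr}[X,Y]$ is a unit multiple of $2-\mathrm{tr}[A,B]$ in $R$, i.e. $2-\mathrm{tr}[X,Y]=u\,(2-\mathrm{tr}[A,B])$ for some $u\in R^*$.
   Context: $\mathbb{Q}(\mathrm{tr}\,\Gamma)$ is the field generated over $\mathbb{Q}$ by the traces of (lifts to $\mathrm{SL}_2\mathbb{C}$ of) elements of $\Gamma$. $[X,Y]=XYX^{-1}Y^{-1}$; its trace is independent of the choice of lifts. *)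

(* Defs.v *)
From HB Require Import structures.
From mathcomp Require Import all_boot all_order all_algebra.
From mathcomp Require Import all_classical all_reals all_analysis.
From mathcomp Require Import complex.
Set Implicit Arguments. Unset Strict Implicit. Unset Printing Implicit Defensive.
Import Order.TTheory GRing.Theory Num.Theory.
Local Open Scope classical_set_scope.
Local Open Scope ring_scope.

Section Kleinian.
Variable R : realType.
Local Notation C := (R[i]).
Local Notation M := ('M[C]_2).

Definition cR (x : R) : C := Complex x 0.

(** Groups Γ ⊂ PSL_2(C) are represented by their full preimage in SL_2(C):
    a set of determinant-one matrices, closed under products and inverses,
    containing I and -I. *)
Definition SL2_lift_group (G : set M) : Prop :=
  [/\ forall g, G g -> \det g = 1,
      G 1%:M, G (- 1%:M),
      (forall g h, G g -> G h -> G (g *m h)) &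
      (forall g, G g -> G (invmx g))].

Definition discrete_lift (G : set M) : Prop :=
  exists2 eps : R, 0 < eps &
    forall g, G g -> (forall i j, `|g i j - (1%:M : M) i j| < cR eps) -> g = 1%:M.

Inductive generated (S : set M) : M -> Prop :=
  | gen_base g : S g -> generated S g
  | gen_one : generated S 1%:M
  | gen_mul g h : generated S g -> generated S h -> generated S (g *m h)
  | gen_inv g : generated S g -> generated S (invmx g).

(** In PSL_2(C), <A,B> = Γ: the lifted group is generated by A, B and -I. *)
Definition generates_PSL (G : set M) (A B : M) : Prop :=
  forall g, G g <-> generated [set A; B; - 1%:M] g.

(** Upper half-space model of H^3: points ((x,y),t) with t > 0, z = x + iy. *)
Definition H3 : set ((R * R) * R) := [set p | 0 < p.2].

(** Poincaré extension of g = [[a,b],[c,d]] acting on (z,t) in H^3: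
    g(z + tj) = ((az+b) conj(cz+d) + a conj(c) t^2 + t j) / (|cz+d|^2 + |c|^2 t^2). *)
Definition act (g : M) (p : (R * R) * R) : (R * R) * R :=
  let z := Complex p.1.1 p.1.2 in
  let t := p.2 in
  let a := g 0 0 in let b := g 0 1 in let c := g 1 0 in let d := g 1 1 in
  let den : C := `|c * z + d| ^+ 2 + `|c| ^+ 2 * cR (t ^+ 2) in
  let w := ((a * z + b) * (c * z + d)^* + a * c^* * cR (t ^+ 2)) / den in
  ((complex.Re w, complex.Im w), t / complex.Re den).

Definition leb3 := (((@lebesgue_measure R) \x (@lebesgue_measure R)) \x (@lebesgue_measure R))%E.

Definition hypvol (F : set ((R * R) * R)) : \bar R :=
  (\int[leb3]_(p in F) (p.2 ^-3)%:E)%E.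

Definition finite_covolume (G : set M) : Prop :=
  exists F : set ((R * R) * R),
    [/\ measurable F, F `<=` H3,
        (forall p, H3 p -> exists g q, [/\ G g, F q & act g q = p]),
        (forall g, G g -> g <> 1%:M -> g <> - 1%:M ->
           leb3.-negligible (F `&` [set p | exists2 q, F q & act g q = p])) &
        (hypvol F < +oo)%E].

Definition kleinian_finite_covolume (G : set M) : Prop :=
  [/\ SL2_lift_group G, discrete_lift G & finite_covolume G].

(** Q(tr Γ): the smallest subfield of C containing all traces. *)
Definition trace_field (G : set M) (x : C) : Prop :=
  forall S : set C,
    S 0 -> S 1 ->
    (forall u v, S u -> S v -> S (u + v)) ->
    (forall u, S u -> S (- u)) ->
    (forall u v, S u -> S v -> S (u * v)) ->
    (forall u, S u -> S (u^-1)) ->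
    (forall g, G g -> S (\tr g)) -> S x.

Definition algebraic_integer (x : C) : Prop :=
  exists2 p : {poly int}, p \is monic & root (map_poly intr p) x.

Definition trace_ring (G : set M) (x : C) : Prop :=
  trace_field G x /\ algebraic_integer x.

Definition trace_ring_unit (G : set M) (u : C) : Prop :=
  trace_ring G u /\ exists2 v, trace_ring G v & u * v = 1.

Definition comm (X Y : M) : M := X *m Y *m invmx X *m invmx Y.

End Kleinian.

(* Main.v *)
Require Import Defs.
From HB Require Import structures.
From mathcomp Require Import all_boot all_order all_algebra.
From mathcomp Require Import all_classical all_reals all_analysis.
From mathcomp Require Import complex.
From mathcomp Require Import ring.
Import Order.TTheory GRing.Theory Num.Theory.
Local Open Scope classical_set_scope.
Local Open Scope ring_scope.

Section Aux.
Variable R : realType.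
Local Notation C := (R[i]).
Local Notation M := ('M[C]_2).
Local Notation i0 := (@ord0 1).
Local Notation i1 := (@ord_max 1).

Lemma ord2P (i : 'I_2) : i = i0 \/ i = i1.
Proof.
case: i => [[|[|n]] Hi].
- by left; apply: val_inj.
- by right; apply: val_inj.
- by [].
Qed.

Lemma mx2_eq (P Q : M) : P i0 i0 = Q i0 i0 -> P i0 i1 = Q i0 i1 ->
  P i1 i0 = Q i1 i0 -> P i1 i1 = Q i1 i1 -> P = Q.
Proof.
move=> h1 h2 h3 h4; apply/matrixP => i j.
by case: (ord2P i) => ->; case: (ord2P j) => ->.
Qed.

Lemma sum2 (F : 'I_2 -> C) : \sum_(i < 2) F i = F i0 + F i1.
Proof. rewrite big_ord_recl big_ord1; congr (_ + F _); exact: val_inj. Qed.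

Lemma det2 (P : M) : \det P = P i0 i0 * P i1 i1 - P i0 i1 * P i1 i0.
Proof.
rewrite (expand_det_row P i0) sum2 /cofactor !det_mx11 !mxE.
have -> : lift i0 0 = i1 by apply: val_inj.
have -> : lift i1 0 = i0 by apply: val_inj.
by rewrite /= expr0 expr1 mul1r mulN1r mulrN.
Qed.

Lemma tr2 (P : M) : \tr P = P i0 i0 + P i1 i1.
Proof. by rewrite /mxtrace sum2. Qed.

Lemma e01 : (i0 == i1) = false. Proof. by []. Qed.
Lemma e10 : (i1 == i0) = false. Proof. by []. Qed.

Ltac expand := rewrite ?tr2 ?det2; rewrite ?(mxE, sum2);
  rewrite ?eqxx ?e01 ?e10 ?mulr1n ?mulr0n.
Ltac mxring := apply: mx2_eq; expand; ring.

Lemma CH (A : M) : A *m A = \tr A *: A - (\det A)%:M.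
Proof. mxring. Qed.

Lemma I1 (A B : M) a b c d :
  A *m (a%:M + b *: A + c *: B + d *: (A *m B)) =
  (- b * \det A)%:M + (a + b * \tr A) *: A + (- d * \det A) *: B
    + (c + d * \tr A) *: (A *m B).
Proof. mxring. Qed.

Lemma I2 (A B : M) a b c d :
  B *m (a%:M + b *: A + c *: B + d *: (A *m B)) =
  (b * (\tr (A *m B) - \tr A * \tr B) - c * \det B - d * \tr A * \det B)%:M
   + (b * \tr B + d * \det B) *: A
   + (a + b * \tr A + c * \tr B + d * \tr (A *m B)) *: B
   + (- b) *: (A *m B).
Proof. mxring. Qed.

Lemma I3 (A B : M) a b c d a' b' c' d' :
  let g := a%:M + b *: A + c *: B + d *: (A *m B) in
  let h := a'%:M + b' *: A + c' *: B + d' *: (A *m B) in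
  g *m h - h *m g = (A *m B - B *m A) *m
    ((b * c' - c * b' + (b * d' - d * b') * \tr A)%:M
      - (b * d' - d * b') *: A - (c * d' - d * c') *: B).
Proof. move=> g h; rewrite /g /h; mxring. Qed.

Lemma I4 (A B : M) a b c :
  \det (a%:M - b *: A - c *: B) = a ^+ 2 + b ^+ 2 * \det A + c ^+ 2 * \det B
    - a * b * \tr A - a * c * \tr B + b * c * (\tr A * \tr B - \tr (A *m B)).
Proof. expand; ring. Qed.

Lemma I5 (P : M) : \det (P - 1%:M) = \det P - \tr P + 1.
Proof. expand; ring. Qed.


Lemma K5 (g h : M) : \det g = 1 -> \det h = 1 ->
  2 - \tr (comm g h) = \det (g *m h - h *m g).
Proof.
move=> dg dh.
have ug : g \in unitmx by rewrite unitmxE dg unitr1.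
have uh : h \in unitmx by rewrite unitmxE dh unitr1.
have e : g *m h = comm g h *m (h *m g).
  by rewrite /comm -!mulmxA (mulKmx uh) mulVmx // mulmx1.
have -> : g *m h - h *m g = (comm g h - 1%:M) *m (h *m g).
  by rewrite mulmxBl mul1mx -e.
have dhg : \det (h *m g) = 1 by rewrite det_mulmx dh dg mulr1.
rewrite det_mulmx I5 dhg.
have -> : \det (comm g h) = 1.
  by rewrite /comm !det_mulmx !det_inv dg dh invr1 !mulr1.
rewrite mulr1; ring.
Qed.

Lemma inv_tr (x : M) : \det x = 1 -> invmx x = (\tr x)%:M - x.
Proof.
move=> dx.
have h : x *m ((\tr x)%:M - x) = (\det x)%:M by mxring.
rewrite dx in h.
have [ux _] := mulmx1_unit h.
by rewrite -[RHS](mulKmx ux) h mulmx1.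
Qed.

Variable G : set M.
Hypothesis hSL : SL2_lift_group G.
Hypothesis htr : forall g, G g -> trace_ring G (\tr g).

Local Notation S := (trace_ring G).

Lemma intC_add x y : @algebraic_integer R x -> @algebraic_integer R y -> @algebraic_integer R (x + y).
Proof. exact: integral_add. Qed.
Lemma intC_mul x y : @algebraic_integer R x -> @algebraic_integer R y -> @algebraic_integer R (x * y).
Proof. exact: integral_mul. Qed.
Lemma intC_opp x : @algebraic_integer R x -> @algebraic_integer R (- x).
Proof. exact: integral_opp. Qed.
Lemma intC_1 : @algebraic_integer R (1 : C).
Proof. exact: integral1. Qed.

Lemma S_add x y : S x -> S y -> S (x + y).
Proof.
move=> [fx ix] [fy iy]; rewrite /trace_ring /trace_field; split; last exact: intC_add.
move=> T h0 h1 hD hN hM hV htrT; apply hD; [exact: (fx T h0 h1 hD hN hM hV htrT) | exact: (fy T h0 h1 hD hN hM hV htrT)].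
Qed.
Lemma S_mul x y : S x -> S y -> S (x * y).
Proof.
move=> [fx ix] [fy iy]; rewrite /trace_ring /trace_field; split; last exact: intC_mul.
move=> T h0 h1 hD hN hM hV htrT; apply hM; [exact: (fx T h0 h1 hD hN hM hV htrT) | exact: (fy T h0 h1 hD hN hM hV htrT)].
Qed.
Lemma S_opp x : S x -> S (- x).
Proof.
move=> [fx ix]; rewrite /trace_ring /trace_field; split; last exact: intC_opp.
move=> T h0 h1 hD hN hM hV htrT; apply hN; exact: (fx T h0 h1 hD hN hM hV htrT).
Qed.
Lemma S_1 : S 1.
Proof. rewrite /trace_ring /trace_field; split; last exact: intC_1. by move=> T h0 h1. Qed.
Lemma S_sub x y : S x -> S y -> S (x - y).
Proof. by move=> hx hy; apply: S_add => //; apply: S_opp. Qed.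
Lemma S_0 : S 0.
Proof. by rewrite -(subrr 1); apply: S_sub; apply: S_1. Qed.
Lemma S_2 : S 2.
Proof. have -> : (2 : C) = 1 + 1 by ring. by apply: S_add; apply: S_1. Qed.

Lemma detG g : G g -> \det g = 1.
Proof. by case: hSL => hd _ _ _ _; apply: hd. Qed.
Lemma mulG g h : G g -> G h -> G (g *m h).
Proof. by case: hSL => _ _ _ hm _; apply: hm. Qed.

Section Lam.
Variables P Q : M.
Hypotheses (hP : G P) (hQ : G Q) (hPQ : generates_PSL G P Q).

Definition Lam (x : M) := exists a b c d,
  [/\ S a, S b, S c, S d & x = a%:M + b *: P + c *: Q + d *: (P *m Q)].

Lemma Lam_add x y : Lam x -> Lam y -> Lam (x + y).
Proof.
move=> [a [b [c [d [Sa Sb Sc Sd ->]]]]] [a' [b' [c' [d' [Sa' Sb' Sc' Sd' ->]]]]].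
exists (a + a'), (b + b'), (c + c'), (d + d'); split; try exact: S_add.
mxring.
Qed.

Lemma Lam_scale k x : S k -> Lam x -> Lam (k *: x).
Proof.
move=> Sk [a [b [c [d [Sa Sb Sc Sd ->]]]]].
exists (k * a), (k * b), (k * c), (k * d); split; try exact: S_mul.
mxring.
Qed.

Lemma trP : S (\tr P). Proof. exact: htr. Qed.
Lemma trQ : S (\tr Q). Proof. exact: htr. Qed.
Lemma trPQ : S (\tr (P *m Q)). Proof. exact/htr/mulG. Qed.
Lemma dP : S (\det P). Proof. rewrite detG //; exact: S_1. Qed.
Lemma dQ : S (\det Q). Proof. rewrite detG //; exact: S_1. Qed.

Ltac Sauto := repeat first
  [ apply: S_add | apply: S_sub | apply: S_mul | apply: S_opp
  | apply: trP | apply: trQ | apply: trPQ | apply: dP | apply: dQ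
  | apply: S_1 | apply: S_2 | assumption ].

Lemma Lam_P x : Lam x -> Lam (P *m x).
Proof.
move=> [a [b [c [d [Sa Sb Sc Sd ->]]]]]; rewrite I1.
by eexists _, _, _, _; split; last reflexivity; Sauto.
Qed.

Lemma Lam_Q x : Lam x -> Lam (Q *m x).
Proof.
move=> [a [b [c [d [Sa Sb Sc Sd ->]]]]]; rewrite I2.
by eexists _, _, _, _; split; last reflexivity; Sauto.
Qed.

Lemma Lam_mul x y : Lam x -> Lam y -> Lam (x *m y).
Proof.
move=> [a [b [c [d [Sa Sb Sc Sd ->]]]]] Ly.
have -> : (a%:M + b *: P + c *: Q + d *: (P *m Q)) *m y =
  a *: y + b *: (P *m y) + c *: (Q *m y) + d *: (P *m (Q *m y)) by mxring.
apply: Lam_add; [apply: Lam_add; [apply: Lam_add|]|];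
  apply: Lam_scale => //; do ?apply: Lam_P; do ?apply: Lam_Q; done.
Qed.

Lemma Lam_tr x : Lam x -> S (\tr x).
Proof.
move=> [a [b [c [d [Sa Sb Sc Sd ->]]]]].
have -> : \tr (a%:M + b *: P + c *: Q + d *: (P *m Q)) =
  2 * a + b * \tr P + c * \tr Q + d * \tr (P *m Q) by expand; ring.
Sauto.
Qed.

Lemma Lam_inv x : \det x = 1 -> Lam x -> Lam (invmx x).
Proof.
move=> dx Lx; rewrite inv_tr //.
have := @Lam_tr x Lx; move: Lx => [a [b [c [d [Sa Sb Sc Sd ->]]]]] St.
exists (\tr (a%:M + b *: P + c *: Q + d *: (P *m Q)) - a), (- b), (- c), (- d).
split; try Sauto. mxring.
Qed.

Lemma gen_Lam g : generated [set P; Q; - 1%:M] g -> Lam g.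
Proof.
elim=> {g}.
- move=> g [[->|->]|->].
  + exists 0, 1, 0, 0; split; try Sauto; try exact: S_0. mxring.
  + exists 0, 0, 1, 0; split; try Sauto; try exact: S_0. mxring.
  + exists (-1), 0, 0, 0; split; try Sauto; try exact: S_0. mxring.
- exists 1, 0, 0, 0; split; try Sauto; try exact: S_0. mxring.
- move=> g h _ Lg _ Lh; exact: Lam_mul.
- move=> g Hg Lg; apply: Lam_inv => //; apply: detG; exact/hPQ.
Qed.

Lemma key g h : G g -> G h ->
  exists2 s, S s & 2 - \tr (comm g h) = s * (2 - \tr (comm P Q)).
Proof.
move=> Gg Gh.
rewrite (@K5 g h (@detG g Gg) (@detG h Gh)) (@K5 P Q (@detG P hP) (@detG Q hQ)).
have := @gen_Lam g (proj1 (hPQ g) Gg); have := @gen_Lam h (proj1 (hPQ h) Gh).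
move=> [a' [b' [c' [d' [Sa' Sb' Sc' Sd' ->]]]]].
move=> [a [b [c [d [Sa Sb Sc Sd ->]]]]].
rewrite I3 det_mulmx I4 mulrC.
by eexists; last reflexivity; Sauto.
Qed.

End Lam.

End Aux.

Theorem mainTheorem5 (R : realType) (G : set 'M[R[i]]_2)
  (hG : kleinian_finite_covolume G)
  (htr : forall g, G g -> trace_ring G (\tr g))
  (A B X Y : 'M[R[i]]_2)
  (hA : G A) (hB : G B) (hX : G X) (hY : G Y)
  (hAB : generates_PSL G A B) (hXY : generates_PSL G X Y) :
  exists2 u : R[i], trace_ring_unit G u &
    2 - \tr (comm X Y) = u * (2 - \tr (comm A B)).
Proof.
case: hG => hSL _ _.
have [s Ss es] := @key R G hSL htr A B hA hB hAB X Y hX hY.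
have [s' Ss' es'] := @key R G hSL htr X Y hX hY hXY A B hA hB.
have [z|nz] := eqVneq (2 - \tr (comm A B)) 0.
  exists 1; first by split; [exact: S_1 | exists 1; [exact: S_1 | rewrite mulr1]].
  by rewrite es z !mulr0.
exists s => //; split => //; exists s' => //.
apply: (mulIf nz); rewrite mul1r (mulrC s) -mulrA -es.
by rewrite -es'.
Qed.
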